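(* In the standing setup, let $S,T\in\mathfrak{S}$ and let $1\le i<j\le k$ with $i\in\mathcal{N}_{(S,\cdot)}$ and $j\in\mathcal{N}_{(\cdot,T)}$. Then there are no configurations $\delta_i$ appearing on $\rho^i_{\mathrm{cap}}$ and $\delta_j$ appearing on $\rho^j_{\mathrm{cap}}$ such that $\delta_i$ and $\delta_j$ have the same state and the difference of their counter values is divisible by $\gcd(\mathrm{eff}(\sigma^+_S),-\mathrm{eff}(\sigma^-_T))$.
   Context: $\mathbb{N}=\{0,1,2,\dots\}$. A one-counter system (OCS) $\mathcal{O}$ consists of a finite set $Q$ of states, a set $T_{>0}\subseteq Q\times\{-1,0,1\}\times Q$ of non-zero transitions and a set $T_{=0}\subseteq Q\times\{0,1\}\times Q$ of zero tests. A configuration is a pair $(q,c)\in Q\times\mathbb{N}$ (state $q$, counter value $c$). A transition $t=(p,d,q)$ has source $p$, target $q$, effect $d$; it can be fired in $(p,c)$ if either $t\in T_{>0}$ and $c>0$, or $t\in T_{=0}$ and $c=0$, yielding $(q,c+d)$. A path is a sequence $(\gamma_1,t_1)\cdots(\gamma_m,t_m)$ such that, with some $\gamma_{m+1}$, firing $t_i$ in $\gamma_i$ yields $\gamma_{i+1}$ for all $i\le m$; its source is $\gamma_1$, target $\gamma_{m+1}$, length $\mathrm{len}=m$, configurations appearing on it are $\gamma_1,\dots,\gamma_{m+1}$, intermediate ones are $\gamma_2,\dots,\gamma_m$; its projection is $\mathrm{proj}=t_1\cdots t_m$ and its effect $\mathrm{eff}$ is the sum of the effects of its transitions. A sequence of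 transitions is consistent if each transition's target is the next one's source. A cycle is a consistent sequence of non-zero transitions starting and ending in the same state (its base state); positive/negative if its effect is positive/negative; simple if no state is visited twice except the base at start and end. The transition multigraph $G$ has vertices $Q$ and an edge $p\to q$ labelled $d$ for each $(p,d,q)\in T_{>0}$; $\mathfrak{S}$ is the set of its SCCs and $n_S$ the number of states in $S\in\mathfrak{S}$. A cycle is contained in $S$ if all its states lie in $S$; $S$ is positively (negatively) enabled if it contains a positive (negative) cycle. For every positively enabled $S$ a simple positive cycle $\sigma^+_S$ contained in $S$ is fixed, and for every negatively enabled $T$ a simple negative cycle $\sigma^-_T$ contained in $T$. An arc is a path whose source and target have counter value $0$ and whose intermediate configurations have positive counter value. A path is low if all configurations appearing on it have counter value $<5n$, where $n=|Q|$. For $S,T\in\mathfrak{S}$, an arc $\rho$ is $(S,T)$-normal if $\rho=\rho_{\mathrm{pref}}\rho_{\mathrm{up}}\rho_{\mathrm{cap}}\rho_{\mathrm{down}}\rho_{\mathrm{suff}}$ (normal decomposition) with $\rho_{\mathrm{pref}},\rho_{\mathrm{suff}}$ low, $\mathrm{proj}(\rho_{\mathrm{up}})=(\sigma^+_S)^a$, $\mathrm{proj}(\rho_{\mathrm{down}})=(\sigma^-_T)^b$ for some $a,b\in\mathbb{N}$, the source of $\rho_{\mathrm{cap}}$ having the base state of $\sigma^+_S$ and its target the base state of $\sigma^-_T$. Writing $A=\mathrm{eff}(\sigma^+_S)$, $B=-\mathrm{eff}(\sigma^-_T)$, such a decomposition is good if: (iii) $aA\le 2\,\mathrm{len}(\rho_{\mathrm{cap}})+2\,\mathrm{lcm}(A,B)$;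 (iv) $bB\le 2\,\mathrm{len}(\rho_{\mathrm{cap}})+2\,\mathrm{lcm}(A,B)$; (v) no infix of $\mathrm{proj}(\rho_{\mathrm{cap}})$ is a cycle with effect divisible by $\gcd(A,B)$; (vi) the target of $\rho_{\mathrm{up}}$ and the source of $\rho_{\mathrm{down}}$ have counter values $>n$; (vii) all configurations appearing on $\rho_{\mathrm{pref}}$ and $\rho_{\mathrm{suff}}$ together are pairwise distinct. Standing setup: $\alpha,\beta$ are configurations with counter value $0$; $\rho=\rho^1\rho^2\cdots\rho^k$ is a path from $\alpha$ to $\beta$ that has the minimum possible number of appearing configurations with counter value $0$ among all paths from $\alpha$ to $\beta$; each $\rho^i$ is an arc; $\{1,\dots,k\}=\mathcal{L}\sqcup\mathcal{N}$ where for $i\in\mathcal{L}$, $\rho^i$ is a low arc of minimum length among all low arcs with the same source and target, and for $i\in\mathcal{N}$, $\rho^i$ is $(S_i,T_i)$-normal for some $S_i,T_i\in\mathfrak{S}$ with a fixed good normal decomposition $\rho^i=\rho^i_{\mathrm{pref}}\rho^i_{\mathrm{up}}\rho^i_{\mathrm{cap}}\rho^i_{\mathrm{down}}\rho^i_{\mathrm{suff}}$. For $S,T\in\mathfrak{S}$: $\mathcal{N}_{(S,T)}=\{i\in\mathcal{N}: (S_i,T_i)=(S,T)\}$, $\mathcal{N}_{(S,\cdot)}=\{i\in\mathcal{N}:S_i=S\}$, $\mathcal{N}_{(\cdot,T)}=\{i\in\mathcal{N}:T_i=T\}$. *)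

(* Defs.v *)
From HB Require Import structures.
From mathcomp Require Import all_boot all_order all_algebra.
Set Implicit Arguments. Unset Strict Implicit. Unset Printing Implicit Defensive.
Import Order.TTheory GRing.Theory Num.Theory.

Section OCS.
Variable Q : finType.

Definition trans := (Q * int * Q)%type.
Definition conf := (Q * nat)%type.
Definition tsrc (t : trans) : Q := t.1.1.
Definition teff (t : trans) : int := t.1.2.
Definition ttgt (t : trans) : Q := t.2.

(* An OCS over the finite state set Q: non-zero transitions T_{>0} with
   effects in {-1,0,1} and zero tests T_{=0} with effects in {0,1}. *)
Record ocs := Ocs {
  Tpos : pred trans;
  Tzero : pred trans;
  Tpos_eff : forall t, Tpos t -> teff t \in [:: (-1)%R; 0%R; 1%R];
  Tzero_eff : forall t, Tzero t -> teff t \in [:: 0%R; 1%R] }.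

Variable O : ocs.

Definition fireable (g : conf) (t : trans) : bool :=
  (tsrc t == g.1) &&
  ((Tpos O t && (0 < g.2)%N) || (Tzero O t && (g.2 == 0%N))).

(* the configuration obtained by firing t in g (meaningful when fireable) *)
Definition step (g : conf) (t : trans) : conf :=
  (ttgt t, `|(Posz g.2 + teff t)%R|%N).

(* A path is given by its source configuration and its projection
   (sequence of transitions); its configurations are then determined. *)
Definition opath := (conf * seq trans)%type.

Fixpoint valid_from (g : conf) (ts : seq trans) : bool :=
  if ts is t :: ts' then fireable g t && valid_from (step g t) ts' else true.

Definition valid (p : opath) : bool := valid_from p.1 p.2.
Definition psrc (p : opath) : conf := p.1.
Definition ptgt (p : opath) : conf := foldl step p.1 p.2.
Definition plen (p : opath) : nat := size p.2.
Definition proj (p : opath) : seq trans := p.2.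
Definition pconfs (p : opath) : seq conf := p.1 :: scanl step p.1 p.2.
(* intermediate configurations: gamma_2, ..., gamma_m *)
Definition pinter (p : opath) : seq conf := take (plen p).-1 (behead (pconfs p)).
Definition seff (ts : seq trans) : int := (\sum_(t <- ts) teff t)%R.
Definition peff (p : opath) : int := seff p.2.

Fixpoint consistent (ts : seq trans) : bool :=
  match ts with
  | t :: ((t' :: _) as ts') => (ttgt t == tsrc t') && consistent ts'
  | _ => true
  end.

Definition is_cycle (c : seq trans) : bool :=
  if c is t0 :: _ then
    all (Tpos O) c && consistent c && (ttgt (last t0 c) == tsrc t0)
  else false.

Definition has_base (c : seq trans) (q : Q) : bool :=
  if c is t0 :: _ then tsrc t0 == q else false.

Definition simple_cycle (c : seq trans) : bool :=
  is_cycle c && uniq (map tsrc c).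

Definition contained (c : seq trans) (S : {set Q}) : bool :=
  all (fun t => (tsrc t \in S) && (ttgt t \in S)) c.

Definition gedge : rel Q :=
  fun p q => has (fun d => Tpos O (p, d, q)) [:: (-1)%R; 0%R; 1%R].

Definition is_scc (S : {set Q}) : Prop :=
  exists p, S = [set q | connect gedge p q && connect gedge q p].

Definition pos_enabled (S : {set Q}) : Prop :=
  exists c, [&& is_cycle c, contained c S & (0 < seff c)%R].
Definition neg_enabled (S : {set Q}) : Prop :=
  exists c, [&& is_cycle c, contained c S & (seff c < 0)%R].

Definition sigma_ok (sigp sign : {set Q} -> seq trans) : Prop :=
  (forall S, is_scc S -> pos_enabled S ->
     [&& simple_cycle (sigp S), contained (sigp S) S & (0 < seff (sigp S))%R]) /\
  (forall T, is_scc T -> neg_enabled T ->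
     [&& simple_cycle (sign T), contained (sign T) T & (seff (sign T) < 0)%R]).

Definition is_arc (p : opath) : bool :=
  [&& valid p, (psrc p).2 == 0%N, (ptgt p).2 == 0%N &
      all (fun g : conf => (0 < g.2)%N) (pinter p)].

Definition is_low (p : opath) : bool :=
  all (fun g : conf => (g.2 < 5 * #|Q|)%N) (pconfs p).

Definition nzero (p : opath) : nat := count (fun g : conf => g.2 == 0%N) (pconfs p).

Record ndec := NDec { dpref : opath; dup : opath; dcap : opath;
                      ddown : opath; dsuff : opath }.

Definition is_ndec (rho : opath) (d : ndec) : Prop :=
  [/\ psrc (dpref d) = psrc rho,
      psrc (dup d) = ptgt (dpref d),
      psrc (dcap d) = ptgt (dup d),
      psrc (ddown d) = ptgt (dcap d) &
      psrc (dsuff d) = ptgt (ddown d)] /\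
      proj rho = proj (dpref d) ++ proj (dup d) ++ proj (dcap d)
                 ++ proj (ddown d) ++ proj (dsuff d).

Definition good_normal (sigp sign : {set Q} -> seq trans) (S T : {set Q})
    (rho : opath) (d : ndec) : Prop :=
  let A := `|seff (sigp S)|%N in
  let B := `|seff (sign T)|%N in
  let n := #|Q| in
  [/\ is_scc S, is_scc T, pos_enabled S & neg_enabled T] /\
  [/\ is_ndec rho d, is_low (dpref d) & is_low (dsuff d)] /\
  exists a b : nat,
  [/\ proj (dup d) = flatten (nseq a (sigp S)),
      proj (ddown d) = flatten (nseq b (sign T)),
      has_base (sigp S) (psrc (dcap d)).1,
      has_base (sign T) (ptgt (dcap d)).1 &
  [/\ (a * A <= 2 * plen (dcap d) + 2 * lcmn A B)%N,
      (b * B <= 2 * plen (dcap d) + 2 * lcmn A B)%N,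
      (forall c, infix c (proj (dcap d)) -> is_cycle c ->
          ~~ (gcdn A B %| `|seff c|)%N),
      (n < (ptgt (dup d)).2)%N /\ (n < (psrc (ddown d)).2)%N &
      uniq (pconfs (dpref d) ++ pconfs (dsuff d))]].

Definition full_path (alpha : conf) (k : nat) (rho : nat -> opath) : opath :=
  (alpha, flatten [seq proj (rho i) | i <- iota 1 k]).

Definition standing_setup (sigp sign : {set Q} -> seq trans)
    (alpha beta : conf) (k : nat) (rho : nat -> opath) (inN : nat -> bool)
    (Sof Tof : nat -> {set Q}) (dec : nat -> ndec) : Prop :=
  [/\ sigma_ok sigp sign, alpha.2 = 0%N & beta.2 = 0%N] /\
  [/\ (forall i, (1 <= i <= k)%N -> is_arc (rho i) /\
          psrc (rho i) = (if i == 1%N then alpha else ptgt (rho i.-1))),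
      ptgt (full_path alpha k rho) = beta &
  [/\ forall p : opath, valid p -> psrc p = alpha -> ptgt p = beta ->
        (nzero (full_path alpha k rho) <= nzero p)%N,
      forall i, (1 <= i <= k)%N -> ~~ inN i ->
        is_low (rho i) /\
        (forall p : opath, is_arc p -> is_low p -> psrc p = psrc (rho i) ->
            ptgt p = ptgt (rho i) -> (plen (rho i) <= plen p)%N) &
      forall i, (1 <= i <= k)%N -> inN i ->
        good_normal sigp sign (Sof i) (Tof i) (rho i) (dec i)]].

End OCS.

(* Main.v *)
Require Import Defs.
From mathcomp Require Import all_boot all_order all_algebra zify.
Set Implicit Arguments. Unset Strict Implicit. Unset Printing Implicit Defensive.
Import GRing.Theory Num.Theory.

Section H.
Variable Q : finType.
Variable O : ocs Q.

Definition pos (c : conf Q) : bool := (0 < c.2)%N.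
Definition goodp (g : conf Q) (ts : seq (trans Q)) :=
  valid_from O g ts && all pos (g :: scanl (@step Q) g ts).
Definition zc (g : conf Q) (ts : seq (trans Q)) :=
  count (fun c : conf Q => c.2 == 0%N) (scanl (@step Q) g ts).

Lemma valid_cat g s1 s2 :
  valid_from O g (s1 ++ s2) = valid_from O g s1 && valid_from O (foldl (@step Q) g s1) s2.
Proof. by elim: s1 g => [|t s IH] g //=; rewrite IH andbA. Qed.

Lemma zc_cat g s1 s2 : zc g (s1 ++ s2) = zc g s1 + zc (foldl (@step Q) g s1) s2.
Proof. by rewrite /zc scanl_cat count_cat. Qed.

Lemma nzeroE g ts : nzero (g, ts) = (g.2 == 0%N) + zc g ts.
Proof. by []. Qed.

Lemma goodp_cons g t ts :
  goodp g (t :: ts) = [&& fireable O g t, pos g & goodp (step g t) ts].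
Proof.
rewrite /goodp /=. by case: (fireable O g t); case: (pos g); case: (valid_from _ _ _).
Qed.

Lemma goodp_pos g ts : goodp g ts -> pos g.
Proof. by case/andP=> _ /andP[]. Qed.

Lemma goodp_nil g : goodp g [::] = pos g.
Proof. by rewrite /goodp /= andbT. Qed.

Lemma goodp_cat g s1 s2 :
  goodp g (s1 ++ s2) = goodp g s1 && goodp (foldl (@step Q) g s1) s2.
Proof.
elim: s1 g => [|t s IH] g /=.
  rewrite goodp_nil. case H: (goodp g s2); last by rewrite andbF.
  by rewrite (goodp_pos H).
by rewrite !goodp_cons IH !andbA.
Qed.

Lemma goodp_valid g ts : goodp g ts -> valid_from O g ts.
Proof. by case/andP. Qed.

Lemma zc_cons g t s : zc g (t :: s) = ((step g t).2 == 0%N) + zc (step g t) s.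
Proof. by []. Qed.

Lemma goodp_zc g ts : goodp g ts -> zc g ts = 0%N.
Proof.
elim: ts g => [|t s IH] g //=.
rewrite goodp_cons => /and3P[_ _ H].
rewrite zc_cons IH //.
by move: (goodp_pos H); rewrite /pos; case: (step g t).2.
Qed.

Lemma zc_last g ts : ((foldl (@step Q) g ts).2 == 0%N) && (g.2 != 0%N) <= zc g ts.
Proof.
elim: ts g => [|t s IH] g /=; first by case: (g.2 == 0%N).
rewrite zc_cons.
case E: ((step g t).2 == 0%N) => /=.
  by case: (_ && _).
have := IH (step g t). rewrite E /=. case: (_ == _) => //=.
by case: (g.2 == 0%N).
Qed.

Lemma step_pos (g : conf Q) t : Tpos O t -> (0 < g.2)%N ->
  Posz (step g t).2 = (Posz g.2 + teff t)%R.
Proof.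
move=> Ht Hg; have := Tpos_eff Ht; rewrite !inE => /or3P [] /eqP E;
rewrite /step /= E; lia.
Qed.

Lemma fire_pos (g : conf Q) t : fireable O g t -> (0 < g.2)%N ->
  (tsrc t == g.1) && Tpos O t.
Proof.
rewrite /fireable => /andP[-> /orP[/andP[-> _]|/andP[_ /eqP E]]] //.
by rewrite E.
Qed.

Lemma shift g ts K : goodp g ts ->
  goodp (g.1, g.2 + K)%N ts /\
  foldl (@step Q) (g.1, g.2 + K)%N ts =
    ((foldl (@step Q) g ts).1, ((foldl (@step Q) g ts).2 + K)%N).
Proof.
elim: ts g => [|t s IH] g.
  by rewrite !goodp_nil /pos /= => H; split => //; lia.
rewrite !goodp_cons => /and3P[Hf Hp Hg].
have /andP[Hs Ht] := fire_pos Hf Hp.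
have Hst : step (g.1, (g.2 + K)%N) t = ((step g t).1, ((step g t).2 + K)%N).
  have E1 := step_pos Ht Hp.
  have Hp' : (0 < (g.1, (g.2 + K)%N).2)%N by rewrite /= ; move: Hp; rewrite /pos; lia.
  have E2 := step_pos Ht Hp'.
  rewrite /= in E2.
  rewrite [LHS]surjective_pairing; congr pair => //.
  move: E1 E2; rewrite /=; move: (g.2) (teff t) => a d; lia.
have [IH1 IH2] := IH _ Hg.
have Hp' : (0 < (g.2 + K))%N by move: Hp; rewrite /pos; lia.
split.
  rewrite Hst IH1 andbT /pos /= Hp' andbT /fireable /= Ht Hp'.
  by rewrite (eqP Hs) eqxx.
rewrite -[foldl _ _ (t :: s)]/(foldl (@step Q) (step _ t) s) Hst IH2.
by [].
Qed.

Lemma teff_bnd t : Tpos O t -> (-1 <= teff t)%R /\ (teff t <= 1)%R.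
Proof. by move=> Ht; have := Tpos_eff Ht; rewrite !inE => /or3P [] /eqP ->. Qed.

Lemma run ts g : consistent ts -> all (Tpos O) ts ->
  (if ts is t :: _ then tsrc t == g.1 else true) -> (size ts < g.2)%N ->
  [/\ goodp g ts, Posz (foldl (@step Q) g ts).2 = (Posz g.2 + seff ts)%R &
      (foldl (@step Q) g ts).1 = last g.1 (map (@ttgt Q) ts)].
Proof.
elim: ts g => [|t s IH] g Hc Ha Hh Hsz.
  by rewrite goodp_nil /seff big_nil addr0 /pos /=; split => //; lia.
have Hc' : consistent s /\ is_true (if s is t' :: _ then tsrc t' == (step g t).1 else true).
  by case: s {IH Ha Hsz} Hc => //= t' s' /andP[/eqP -> ->].
case: Hc' => Hc1 Hh1.
move: Ha => /= /andP[Ht Ha].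
have Hg : (0 < g.2)%N by move: Hsz => /=; lia.
have Hst := step_pos Ht Hg.
have [Hb1 Hb2] := teff_bnd Ht.
have Hsz' : (size s < (step g t).2)%N by move: Hsz Hst Hb1 => /=; lia.
have [IH1 IH2 IH3] := IH _ Hc1 Ha Hh1 Hsz'.
split.
- by rewrite goodp_cons IH1 /pos Hg /fireable Hh Ht Hg.
- rewrite /= IH2 Hst /seff big_cons -/(seff s). lia.
- by rewrite /= IH3.
Qed.

Lemma cycle_once c q v : is_cycle O c -> has_base c q -> (size c < v)%N ->
  [/\ goodp (q, v) c, Posz (foldl (@step Q) (q, v) c).2 = (Posz v + seff c)%R &
      (foldl (@step Q) (q, v) c).1 = q].
Proof.
case: c => [|t0 c'] //= /andP[/andP[Ha Hc] Hl] /eqP Hb Hsz.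
have := @run (t0 :: c') (q, v) Hc Ha. rewrite /= Hb eqxx => /(_ isT Hsz) [H1 H2 H3].
split => //. rewrite H3 /=.
have -> : last (ttgt t0) [seq ttgt i | i <- c'] = ttgt (last t0 c') by rewrite last_map.
by rewrite (eqP Hl).
Qed.

Lemma pump_up c q : is_cycle O c -> has_base c q -> (size c <= #|Q|)%N ->
  (0 < seff c)%R -> forall x v, (#|Q| < v)%N ->
  goodp (q, v) (flatten (nseq x c)) /\
  foldl (@step Q) (q, v) (flatten (nseq x c)) = (q, v + x * `|seff c|)%N.
Proof.
move=> Hc Hb Hsz Hpos; elim=> [|x IH] v Hv.
  by rewrite /= goodp_nil /pos /= addn0; split => //; lia.
rewrite [flatten _]/= goodp_cat foldl_cat.
have [H1 H2 H3] := @cycle_once c q v Hc Hb (leq_ltn_trans Hsz Hv).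
set g := foldl _ _ c in H2 H3 *.
have Hg : g = (q, (v + `|seff c|)%N).
  rewrite [g]surjective_pairing H3; congr pair; move: H2 Hpos; lia.
rewrite Hg; have [IH1 IH2] := IH (v + `|seff c|)%N ltac:(lia).
rewrite H1 IH1 IH2; split => //; congr pair; lia.
Qed.

Lemma pump_down c q : is_cycle O c -> has_base c q -> (size c <= #|Q|)%N ->
  (seff c < 0)%R -> forall y v, (#|Q| < v)%N ->
  goodp (q, v + y * `|seff c|)%N (flatten (nseq y c)) /\
  foldl (@step Q) (q, v + y * `|seff c|)%N (flatten (nseq y c)) = (q, v).
Proof.
move=> Hc Hb Hsz Hneg; elim=> [|y IH] v Hv.
  by rewrite /= mul0n addn0 goodp_nil /pos /=; split => //; lia.
rewrite [flatten _]/= goodp_cat foldl_cat.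
have [H1 H2 H3] := @cycle_once c q (v + y.+1 * `|seff c|)%N Hc Hb ltac:(lia).
set g := foldl _ _ c in H2 H3 *.
have Hg : g = (q, (v + y * `|seff c|)%N).
  rewrite [g]surjective_pairing H3; congr pair; move: H2 Hneg; lia.
rewrite Hg; have [IH1 IH2] := IH v Hv.
by rewrite H1 IH1 IH2.
Qed.

Lemma mem_pconfs d g ts : d \in pconfs (g, ts) ->
  exists m, d = foldl (@step Q) g (take m ts).
Proof.
rewrite /pconfs /= => /(nthP g) [m Hm <-].
exists m; rewrite nth_cons_scanl //.
by move: Hm; rewrite /= size_scanl.
Qed.


Lemma arc_mid (p : opath Q) s1 s2 s3 : is_arc O p -> proj p = s1 ++ s2 ++ s3 ->
  (0 < (foldl (@step Q) (psrc p) s1).2)%N ->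
  (0 < (foldl (@step Q) (psrc p) (s1 ++ s2)).2)%N ->
  goodp (foldl (@step Q) (psrc p) s1) s2.
Proof.
case: p => g ts; rewrite /is_arc /proj /psrc /= => /and4P [Hv _ _ Hint] Hts H1 H2.
subst ts.
rewrite /goodp; apply/andP; split.
  by move: Hv; rewrite /valid /= !valid_cat => /andP[_ /andP[]].
case/lastP: s2 H2 Hint Hv => [|s2' t] H2 Hint Hv; first by rewrite /= andbT.
rewrite /= scanl_rcons all_rcons /pos H1 /=.
rewrite foldl_cat in H2; rewrite /pos H2 /=.
apply/allP => x Hx.
move/allP: Hint; apply.
rewrite /pinter /plen /pconfs /= cat_rcons scanl_cat scanl_cat catA.
rewrite take_cat ifN; last by rewrite size_cat !size_scanl !size_cat /=; lia.
rewrite mem_cat take_cat ifN; last by rewrite !size_scanl !size_cat /=; lia.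
by rewrite mem_cat Hx orbT.
Qed.


Lemma link g s1 s2 g' : foldl (@step Q) g s1 = g' -> valid_from O g s1 ->
  [/\ valid_from O g (s1 ++ s2) = valid_from O g' s2,
      foldl (@step Q) g (s1 ++ s2) = foldl (@step Q) g' s2 &
      zc g (s1 ++ s2) = zc g s1 + zc g' s2].
Proof. by move=> E V; rewrite valid_cat zc_cat foldl_cat E V. Qed.

Lemma link_good g s1 s2 g' : goodp g s1 -> foldl (@step Q) g s1 = g' ->
  [/\ valid_from O g (s1 ++ s2) = valid_from O g' s2,
      foldl (@step Q) g (s1 ++ s2) = foldl (@step Q) g' s2 &
      zc g (s1 ++ s2) = zc g' s2].
Proof.
move=> Hg E; have [V1 V2 V3] := link s2 E (goodp_valid Hg).
by rewrite V3 goodp_zc.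
Qed.

Definition G (rho : nat -> opath Q) a b := flatten [seq proj (rho l) | l <- iota a b].

Lemma G_split rho a b c : G rho a (b + c) = G rho a b ++ G rho (a + b) c.
Proof. by rewrite /G iotaD map_cat flatten_cat. Qed.

Lemma G1 rho a : G rho a 1 = proj (rho a).
Proof. by rewrite /G /= cats0. Qed.

Lemma Fprop (alpha : conf Q) k rho :
  (forall i, (1 <= i <= k)%N -> is_arc O (rho i) /\
          psrc (rho i) = (if i == 1%N then alpha else ptgt (rho i.-1))) ->
  forall m, (m <= k)%N -> valid_from O alpha (G rho 1 m) /\
    foldl (@step Q) alpha (G rho 1 m) = (if m == 0%N then alpha else ptgt (rho m)).
Proof.
move=> Harc; elim=> [|m IH] Hm; first by [].
have [IH1 IH2] := IH (ltnW Hm).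
have [Ha Hs] := Harc m.+1 ltac:(lia).
have Hs' : psrc (rho m.+1) = foldl (@step Q) alpha (G rho 1 m).
  by rewrite Hs IH2; case: m {IH IH1 IH2 Hm Hs Ha}.
have -> : G rho 1 m.+1 = G rho 1 m ++ proj (rho m.+1).
  by rewrite -[m.+1]addn1 G_split G1 add1n addn1.
rewrite valid_cat foldl_cat IH1 -Hs' /=.
by case/and4P: Ha.
Qed.

Lemma ndec_E (rho : opath Q) d : is_ndec rho d ->
 [/\ psrc (dcap d) = foldl (@step Q) (psrc rho) (proj (dpref d) ++ proj (dup d)),
     psrc (ddown d) = foldl (@step Q) (psrc rho) (proj (dpref d) ++ proj (dup d) ++ proj (dcap d)),
     psrc (ddown d) = foldl (@step Q) (psrc (dcap d)) (proj (dcap d)) &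
     ptgt rho = foldl (@step Q) (psrc (dcap d)) (proj (dcap d) ++ proj (ddown d) ++ proj (dsuff d))].
Proof.
case: d => [[g1 s1] [g2 s2] [g3 s3] [g4 s4] [g5 s5]]; case: rho => g0 s0.
rewrite /is_ndec /psrc /ptgt /proj /= => [[[E1 E2 E3 E4 E5] Ep]].
subst; rewrite !foldl_cat; split => //.
Qed.

Lemma bezout_nat A B u v : (0 < A)%N -> (0 < B)%N ->
  (gcdn A B %| `|(Posz u - Posz v)%R|)%N -> exists x y, (u + x * A = v + y * B)%N.
Proof.
move=> HA HB; case: (leqP u v) => Huv.
  have -> : `|(Posz u - Posz v)%R|%N = (v - u)%N by lia.
  move/dvdnP => [m Hm].
  case: (egcdnP B HA) => km kn E _.
  exists (km * m)%N, (kn * m)%N. nia.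
have -> : `|(Posz u - Posz v)%R|%N = (u - v)%N by lia.
rewrite gcdnC; move/dvdnP => [m Hm].
case: (egcdnP A HB) => km kn E _.
exists (kn * m)%N, (km * m)%N. nia.
Qed.


Lemma mem_pconfs' d (p : opath Q) : d \in pconfs p ->
  exists m, d = foldl (@step Q) (psrc p) (take m (proj p)).
Proof. by case: p => g ts; apply: mem_pconfs. Qed.

Lemma G_last rho m : (0 < m)%N -> G rho 1 m = G rho 1 m.-1 ++ proj (rho m).
Proof. by case: m => // m _; rewrite -[m.+1]addn1 G_split G1 add1n addn1. Qed.

Lemma G_mid rho a b : (a <= b)%N -> G rho 1 b = G rho 1 a ++ G rho a.+1 (b - a).
Proof. by move=> H; rewrite -{1}(subnKC H) G_split add1n. Qed.

Lemma simple_size c : simple_cycle O c -> (size c <= #|Q|)%N.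
Proof.
case/andP=> _ /card_uniqP E.
by rewrite -(size_map (@tsrc Q)) -E max_card.
Qed.

End H.

Lemma absz_gt0_pos (z : int) : (0 < z)%R -> (0 < `|z|)%N.
Proof. lia. Qed.
Lemma absz_gt0_neg (z : int) : (z < 0)%R -> (0 < `|z|)%N.
Proof. lia. Qed.

Unset Implicit Arguments. Set Strict Implicit. Set Printing Implicit Defensive.

Theorem lemma4 (Q : finType) (O : ocs Q) (sigp sign : {set Q} -> seq (trans Q))
    (alpha beta : conf Q) (k : nat) (rho : nat -> opath Q) (inN : nat -> bool)
    (Sof Tof : nat -> {set Q}) (dec : nat -> ndec Q)
    (S T : {set Q}) (i j : nat) :
  standing_setup O sigp sign alpha beta k rho inN Sof Tof dec ->
  is_scc O S -> is_scc O T ->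
  (1 <= i)%N -> (i < j)%N -> (j <= k)%N ->
  inN i -> Sof i = S -> inN j -> Tof j = T ->
  ~ (exists (di dj : conf Q),
       [/\ di \in pconfs (dcap (dec i)), dj \in pconfs (dcap (dec j)),
           di.1 = dj.1 &
           (gcdn `|seff (sigp S)| `|seff (sign T)| %| `|(Posz di.2 - Posz dj.2)%R|)%N]).
Proof.
move=> [[Hsig Ha0 Hb0] [Harc Hend [Hmin Hlow Hnorm]]] HS HT Hi Hij Hjk Ni Si Nj Tj
  [di [dj [Hdi Hdj Hst Hdvd]]].
have Gi := Hnorm i ltac:(lia) Ni; rewrite Si in Gi.
have Gj := Hnorm j ltac:(lia) Nj; rewrite Tj in Gj.
case: Gi => [[_ _ HposS _] [[Ndi _ _] [ai [bi [_ _ HbSi _ [_ _ _ [Hvi1 Hvi2] _]]]]]].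
case: Gj => [[_ _ _ HnegT] [[Ndj _ _] [aj [bj [_ _ _ HbTj [_ _ _ [Hvj1 Hvj2] _]]]]]].

have [Ci1 Ci2 Ci3 Ci4] := ndec_E Ndi.
have [Cj1 Cj2 Cj3 Cj4] := ndec_E Ndj.
case: (Ndi) => [[_ _ Ei3 _ _] Epi].
case: (Ndj) => [[_ _ Ej3 Ej4 _] Epj].
rewrite -Ej3 in Hvj1.
rewrite -Ei3 in Hvi1. rewrite -Ej4 in HbTj.
have /and3P [HsS _ HeffS] := (proj1 Hsig) S HS HposS.
have /and3P [HsT _ HeffT] := (proj2 Hsig) T HT HnegT.
have HszS := simple_size HsS. have HszT := simple_size HsT.
have HcycS : is_cycle O (sigp S) by case/andP: HsS.
have HcycT : is_cycle O (sign T) by case/andP: HsT.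
set A := `|seff (sigp S)|%N in Hdvd.
set B := `|seff (sign T)|%N in Hdvd.
have HA : (0 < A)%N by apply: absz_gt0_pos.
have HB : (0 < B)%N by apply: absz_gt0_neg.
have [x [y Hxy]] := bezout_nat HA HB Hdvd.
have Hik : (1 <= i <= k)%N by rewrite Hi (leq_trans (ltnW Hij) Hjk).
have Hjk' : (1 <= j <= k)%N by rewrite Hjk andbT (leq_trans Hi (ltnW Hij)).
have [HarcI _] := Harc i Hik.
have [HarcJ _] := Harc j Hjk'.
have Hpre : forall m, (1 <= m <= k)%N -> foldl (@step Q) alpha (G rho 1 m.-1) = psrc (rho m).
  move=> m Hm; have [_ E] := Fprop Harc (m := m.-1) (leq_trans (leq_pred m) (proj2 (andP Hm))).
  rewrite E; clear E; have [_ ->] := Harc m Hm; by case: m Hm => [|[|m]].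
have [Fk1 Fk2] := Fprop Harc (leqnn k).
have Hij1 : (i <= j.-1)%N by clear -Hij; lia.
have Hj0 : (0 < j)%N by case/andP: Hjk'.
have Gk : G rho 1 k = (G rho 1 i.-1 ++ proj (rho i)) ++ G rho i.+1 (j.-1 - i) ++
    proj (rho j) ++ G rho j.+1 (k - j).
  by rewrite (G_mid rho Hjk) (G_last rho Hj0) (G_mid rho Hij1) (G_last rho Hi) -!catA.
set X := G rho 1 i.-1 ++ proj (dpref (dec i)) ++ proj (dup (dec i)).
set Y := proj (dcap (dec i)) ++ proj (ddown (dec i)) ++ proj (dsuff (dec i)) ++
   G rho i.+1 (j.-1 - i) ++ proj (dpref (dec j)) ++ proj (dup (dec j)) ++ proj (dcap (dec j)).
set Z := proj (ddown (dec j)) ++ proj (dsuff (dec j)) ++ G rho j.+1 (k - j).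
have HGk : G rho 1 k = X ++ Y ++ Z by rewrite Gk Epi Epj /X /Y /Z -!catA.
have HXY : X ++ Y = G rho 1 j.-1 ++ (proj (dpref (dec j)) ++ proj (dup (dec j)) ++ proj (dcap (dec j))).
  by rewrite (G_mid rho Hij1) (G_last rho Hi) Epi /X /Y -!catA.
have FX : foldl (@step Q) alpha X = psrc (dcap (dec i)).
  by rewrite /X foldl_cat Hpre // Ci1.
have FXY : foldl (@step Q) alpha (X ++ Y) = psrc (ddown (dec j)).
  by rewrite HXY foldl_cat Hpre // Cj2.
have FY : foldl (@step Q) (psrc (dcap (dec i))) Y = psrc (ddown (dec j)).
  by rewrite -FX -foldl_cat FXY.
have [VX VZ] : valid_from O alpha X /\ valid_from O (psrc (ddown (dec j))) Z.
  move: Fk1; rewrite HGk catA valid_cat FXY => /andP[VXY ->].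
  by move: VXY; rewrite valid_cat => /andP[->].
have Nfull : nzero (full_path alpha k rho) =
    ((alpha.2 == 0%N) + zc alpha X + zc (psrc (dcap (dec i))) Y + zc (psrc (ddown (dec j))) Z)%N.
  have -> : full_path alpha k rho = (alpha, G rho 1 k) by [].
  by rewrite nzeroE HGk zc_cat FX zc_cat FY !addnA.
have ZY : (0 < zc (psrc (dcap (dec i))) Y)%N.
  have -> : Y = (proj (dcap (dec i)) ++ proj (ddown (dec i)) ++ proj (dsuff (dec i))) ++
     (G rho i.+1 (j.-1 - i) ++ proj (dpref (dec j)) ++ proj (dup (dec j)) ++ proj (dcap (dec j))).
    by rewrite /Y -!catA.
  rewrite zc_cat.
  have := zc_last (psrc (dcap (dec i))) (proj (dcap (dec i)) ++ proj (ddown (dec i)) ++ proj (dsuff (dec i))).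
  rewrite -Ci4. case/and4P: HarcI => _ _ -> _ /=.
  have -> : ((psrc (dcap (dec i))).2 != 0%N) by move: Hvi1; case: (_.2).
  by move=> H; apply: leq_trans (leq_addr _ _).
have GcapI : goodp O (psrc (dcap (dec i))) (proj (dcap (dec i))).
  have := @arc_mid _ O (rho i) (proj (dpref (dec i)) ++ proj (dup (dec i))) (proj (dcap (dec i)))
     (proj (ddown (dec i)) ++ proj (dsuff (dec i))) HarcI.
  rewrite -Ci1 -[X in foldl _ _ X]catA -Ci2; apply.
  - by rewrite Epi -!catA.
  - exact: leq_ltn_trans (leq0n _) Hvi1.
  - exact: leq_ltn_trans (leq0n _) Hvi2.
have GcapJ : goodp O (psrc (dcap (dec j))) (proj (dcap (dec j))).
  have := @arc_mid _ O (rho j) (proj (dpref (dec j)) ++ proj (dup (dec j))) (proj (dcap (dec j)))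
     (proj (ddown (dec j)) ++ proj (dsuff (dec j))) HarcJ.
  rewrite -Cj1 -[X in foldl _ _ X]catA -Cj2; apply.
  - by rewrite Epj -!catA.
  - exact: leq_ltn_trans (leq0n _) Hvj1.
  - exact: leq_ltn_trans (leq0n _) Hvj2.
have [m1 Hm1] := mem_pconfs' Hdi.
have [m2 Hm2] := mem_pconfs' Hdj.
have Gti : goodp O (psrc (dcap (dec i))) (take m1 (proj (dcap (dec i)))).
  by move: GcapI; rewrite -{1}(cat_take_drop m1 (proj (dcap (dec i)))) goodp_cat => /andP[].
have Gdj : goodp O dj (drop m2 (proj (dcap (dec j)))).
  by move: GcapJ; rewrite -{1}(cat_take_drop m2 (proj (dcap (dec j)))) goodp_cat -Hm2 => /andP[].
have FDj : foldl (@step Q) dj (drop m2 (proj (dcap (dec j)))) = psrc (ddown (dec j)).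
  by rewrite Hm2 -foldl_cat cat_take_drop Cj3.
rewrite /A /B in Hxy.
have [P1g P1f] := pump_up HcycS HbSi HszS HeffS x Hvi1.
rewrite -surjective_pairing in P1g P1f.
have [S1g S1f] := shift (x * `|seff (sigp S)|)%N Gti.
rewrite -Hm1 Hxy Hst in S1f.
have [S2g S2f] := shift (y * `|seff (sign T)|)%N Gdj.
rewrite FDj in S2f.
have [P2g P2f] := pump_down HcycT HbTj HszT HeffT y Hvj2.
rewrite -surjective_pairing in P2f.
set N := X ++ flatten (nseq x (sigp S)) ++ take m1 (proj (dcap (dec i))) ++
   drop m2 (proj (dcap (dec j))) ++ flatten (nseq y (sign T)) ++ Z.
have [L4a L4b L4c] := link_good Z P2g P2f.
have [L3a L3b L3c] := link_good (flatten (nseq y (sign T)) ++ Z) S2g S2f.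
have [L2a L2b L2c] := link_good (drop m2 (proj (dcap (dec j))) ++ flatten (nseq y (sign T)) ++ Z) S1g S1f.
have [L1a L1b L1c] := link_good (take m1 (proj (dcap (dec i))) ++ drop m2 (proj (dcap (dec j))) ++ flatten (nseq y (sign T)) ++ Z) P1g P1f.
have [L0a L0b L0c] := link (flatten (nseq x (sigp S)) ++ take m1 (proj (dcap (dec i))) ++ drop m2 (proj (dcap (dec j))) ++ flatten (nseq y (sign T)) ++ Z) FX VX.
have Hbeta : foldl (@step Q) alpha (G rho 1 k) = beta := Hend.
have HZ : foldl (@step Q) (psrc (ddown (dec j))) Z = beta.
  by rewrite -Hbeta HGk catA foldl_cat FXY.
have Hm := Hmin (alpha, N).
rewrite /valid /psrc /ptgt /= in Hm.
have VN : valid_from O alpha N by rewrite /N L0a L1a L2a L3a L4a.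
have EN : foldl (@step Q) alpha N = beta by rewrite /N L0b L1b L2b L3b L4b.
have ZN : zc alpha N = (zc alpha X + zc (psrc (ddown (dec j))) Z)%N
  by rewrite /N L0c L1c L2c L3c L4c.
have := Hm VN erefl EN.
rewrite nzeroE Nfull /= ZN.
clear -ZY. lia.
Qed.
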